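(* Let $S$ and $T$ be finite sets and $E\subseteq S\times T$. For each $(s,t)\in E$ let $X_{st}$ be a random variable with distribution $\mathrm{Beta}(1+\alpha_{st},1+\beta_{st})$ (with $\alpha_{st},\beta_{st}\ge 0$), the $X_{st}$ being independent. For $y\in\mathbb{R}^S_{+}$ and $x\in[0,1]^E$ define \[ \mathcal I(y;x)=\sum_{t\in T}\Big(1-\prod_{(s,t)\in E} x_{st}^{\,y(s)}\Big). \] Let $\mathcal Y\subseteq\mathbb{R}^S_+$ be convex. Then both problems $\max_{y\in\mathcal Y}\mathcal I(y;\mathbb{E}[X])$ and $\max_{y\in\mathcal Y}\mathbb{E}[\mathcal I(y;X)]$ are concave maximization problems over the convex set $\mathcal Y$, i.e. the functions $y\mapsto \mathcal I(y;\mathbb{E}[X])$ and $y\mapsto\mathbb{E}[\mathcal I(y;X)]$ are concave on $\mathcal Y$.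
   Context: $x_{st}$ is interpreted as the failure probability of the edge $(s,t)$ in a bipartite influence graph, and $y(s)$ as the budget assigned to channel $s$; $\mathcal I(y;x)$ is the expected number of influenced nodes of $T$. *)

(* Defs.v *)
From HB Require Import structures.
From mathcomp Require Import all_boot all_order all_algebra.
From mathcomp Require Import all_classical all_reals all_analysis.
Set Implicit Arguments. Unset Strict Implicit. Unset Printing Implicit Defensive.
Import Order.TTheory GRing.Theory Num.Theory.
Import numFieldNormedType.Exports.
Local Open Scope classical_set_scope.
Local Open Scope ring_scope.

(* Unnormalised density of Beta(1+a, 1+b) on [0,1]: x^a (1-x)^b. *)
Definition beta_dens {R : realType} (a b : R) (x : R) : R :=
  x `^ a * (1 - x) `^ b.

Definition has_beta_law {R : realType} {d : measure_display} {Om : measurableType d}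
    (P : probability Om R) (X : Om -> R) (a b : R) : Prop :=
  forall A : set R, measurable A ->
    P (X @^-1` A) =
    (fine (\int[@lebesgue_measure R]_(x in A `&` `[0, 1]) (beta_dens a b x)%:E) /
     fine (\int[@lebesgue_measure R]_(x in `[0, 1]) (beta_dens a b x)%:E))%:E.

Definition mutually_independent {R : realType} {d : measure_display} {Om : measurableType d}
    {I : finType} (P : probability Om R) (E : {set I}) (X : I -> Om -> R) : Prop :=
  forall A : I -> set R, (forall e, measurable (A e)) ->
    P (\bigcap_(e in [set e | e \in E]) (X e @^-1` A e)) =
    (\prod_(e in E) P (X e @^-1` A e))%E.

Definition influence {R : realType} {S T : finType} (E : {set S * T})
    (y : S -> R) (x : S * T -> R) : R :=
  \sum_(t : T) (1 - \prod_(s : S | (s, t) \in E) x (s, t) `^ y s).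

Definition convex_dom {R : realType} {S : finType} (Y : set (S -> R)) : Prop :=
  forall y1 y2 (l : R), Y y1 -> Y y2 -> 0 <= l <= 1 ->
    Y (fun s => l * y1 s + (1 - l) * y2 s).

Definition concave_on {R : realType} {S : finType} (Y : set (S -> R)) (f : (S -> R) -> R) : Prop :=
  forall y1 y2 (l : R), Y y1 -> Y y2 -> 0 <= l <= 1 ->
    l * f y1 + (1 - l) * f y2 <= f (fun s => l * y1 s + (1 - l) * y2 s).

(* Main.v *)
Require Import Defs.
From HB Require Import structures.
From mathcomp Require Import all_boot all_order all_algebra.
From mathcomp Require Import all_classical all_reals all_analysis.
From mathcomp Require Import ring lra.
From mathcomp Require Import measurable_realfun.
Import Order.TTheory GRing.Theory Num.Theory.
Import numFieldNormedType.Exports.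
Local Open Scope classical_set_scope.
Local Open Scope ring_scope.
Set Implicit Arguments. Unset Strict Implicit.

Section Alg.
Variable R : realType.

Lemma expR_tan (m a : R) : expR m * (1 + (a - m)) <= expR a.
Proof.
have := expR_ge1Dx (a - m); move/(ler_wpM2l (expR_ge0 m)).
by rewrite -expRD (_ : m + (a - m) = a) //; ring.
Qed.

Lemma expR_conv (l a b : R) : 0 <= l <= 1 ->
  expR (l * a + (1 - l) * b) <= l * expR a + (1 - l) * expR b.
Proof.
move=> /andP[l0 l1]; set m := l * a + (1 - l) * b.
have ha := expR_tan m a; have hb := expR_tan m b.
have -> : expR m = l * (expR m * (1 + (a - m))) + (1 - l) * (expR m * (1 + (b - m))).
  rewrite /m; ring.
by rewrite lerD // ler_wpM2l // subr_ge0.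
Qed.

Lemma prod_conv (I : finType) (Pr : pred I) (a u v : I -> R) (l : R) :
  (forall i, 0 <= u i) -> (forall i, 0 <= v i) -> 0 <= l <= 1 ->
  \prod_(i | Pr i) a i `^ (l * u i + (1 - l) * v i) <=
  l * \prod_(i | Pr i) a i `^ u i + (1 - l) * \prod_(i | Pr i) a i `^ v i.
Proof.
move=> u0 v0 /andP[l0 l1].
have P0 w : 0 <= \prod_(i | Pr i) a i `^ w i.
  by apply: prodr_ge0 => i _; exact: powR_ge0.
have [->|ln0] := eqVneq l 0.
  rewrite (eq_bigr (fun i => a i `^ v i)) => [|i _]; last first.
    by rewrite mul0r add0r subr0 mul1r.
  by rewrite mul0r add0r subr0 mul1r.
have [->|ln1] := eqVneq l 1.
  rewrite (eq_bigr (fun i => a i `^ u i)) => [|i _]; last first.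
    by rewrite subrr mul0r addr0 mul1r.
  by rewrite subrr mul0r addr0 mul1r.
have l1' : 1 - l != 0 by rewrite subr_eq0 eq_sym.
case: (boolP [exists i, [&& Pr i, a i == 0 & l * u i + (1 - l) * v i != 0]]).
  move=> /existsP[i /and3P[Pi /eqP ai mi]].
  rewrite (bigD1 i) //= ai powR0 // mul0r.
  by apply: addr_ge0; apply: mulr_ge0 => //; rewrite subr_ge0.
rewrite negb_exists => /forallP H.
have key w : (forall i, Pr i -> a i = 0 -> w i = 0) ->
    \prod_(i | Pr i) a i `^ w i = expR (\sum_(i | Pr i) w i * ln (a i)).
  move=> hw; rewrite expR_sum; apply: eq_bigr => i Pi.
  have [ai|ai] := eqVneq (a i) 0.
    by rewrite ai hw // powRr0 mul0r expR0.
  by rewrite /powR (negbTE ai).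
have hm i : Pr i -> a i = 0 -> l * u i + (1 - l) * v i = 0.
  move=> Pi ai; apply/eqP; have := H i; by rewrite Pi ai eqxx /= negbK.
have hu i : Pr i -> a i = 0 -> u i = 0 /\ v i = 0.
  move=> Pi ai; have e := hm i Pi ai.
  have A : 0 <= l * u i by apply: mulr_ge0.
  have B : 0 <= (1 - l) * v i by apply: mulr_ge0; rewrite // subr_ge0.
  have e1 : l * u i = 0 by lra.
  have e2 : (1 - l) * v i = 0 by lra.
  move/eqP: e1; rewrite mulf_eq0 (negbTE ln0) /= => /eqP ->.
  by move/eqP: e2; rewrite mulf_eq0 (negbTE l1') /= => /eqP ->.
have := key (fun i => l * u i + (1 - l) * v i) hm; rewrite /= => ->.
rewrite (key u) => [|i Pi ai]; last by case: (hu i Pi ai).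
rewrite (key v) => [|i Pi ai]; last by case: (hu i Pi ai).
rewrite (eq_bigr (fun i => l * (u i * ln (a i)) + (1 - l) * (v i * ln (a i)))) => [|i _]; last by ring.
rewrite big_split -!mulr_sumr /=.
by apply: expR_conv; rewrite l0 l1.
Qed.

Lemma infl_conc (S T : finType) (E : {set S * T}) (x : S * T -> R)
    (y1 y2 : S -> R) (l : R) :
  (forall s, 0 <= y1 s) -> (forall s, 0 <= y2 s) -> 0 <= l <= 1 ->
  l * influence E y1 x + (1 - l) * influence E y2 x <=
  influence E (fun s => l * y1 s + (1 - l) * y2 s) x.
Proof.
move=> h1 h2 hl; rewrite /influence !mulr_sumr -big_split; apply: ler_sum => t _ /=.
have := @prod_conv S (fun s => (s, t) \in E) (fun s => x (s, t)) y1 y2 l h1 h2 hl.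
rewrite /=; lra.
Qed.

Lemma powR_le1' (a y : R) : 0 <= a <= 1 -> 0 <= y -> a `^ y <= 1.
Proof.
move=> /andP[a0 a1] y0; rewrite /powR; case: ifP => _.
  by case: (y == 0).
by rewrite -expR0 ler_expR mulr_ge0_le0 // ln_le0.
Qed.

Definition clamp (r : R) : R := Num.min (Num.max r 0) 1.

Lemma clamp01 r : 0 <= clamp r <= 1.
Proof.
rewrite /clamp; apply/andP; split.
  by rewrite le_min ler01 le_max lexx orbT.
by rewrite ge_min lexx orbT.
Qed.

Lemma clampE r : 0 <= r <= 1 -> clamp r = r.
Proof.
move=> /andP[r0 r1]; rewrite /clamp (max_idPl r0); exact/min_idPl.
Qed.

Lemma infl_bound (S T : finType) (E : {set S * T}) (x : S * T -> R) (y : S -> R) :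
  (forall e, 0 <= x e <= 1) -> (forall s, 0 <= y s) ->
  0 <= influence E y x <= \sum_(t : T) (1 : R).
Proof.
move=> hx hy; rewrite /influence; apply/andP; split.
  apply: sumr_ge0 => t _; rewrite subr_ge0; apply: prodr_ile1 => s _.
  by rewrite powR_ge0 powR_le1'.
apply: ler_sum => t _; rewrite lerBlDr lerDl; apply: prodr_ge0 => s _.
exact: powR_ge0.
Qed.

Section Prob.
Context {d : measure_display} {Om : measurableType d} (P : probability Om R).

Lemma meas_infl (S T : finType) (E : {set S * T}) (Z : S * T -> Om -> R) (y : S -> R) :
  (forall e, measurable_fun setT (Z e)) ->
  measurable_fun setT (fun w => influence E y (fun e => Z e w)).
Proof.
move=> mZ; rewrite /influence.
apply: measurable_sum => t.
apply: measurable_realfun.measurable_funB; first exact: measurable_cst.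
under eq_fun do rewrite big_mkcond.
apply: measurable_prod => s _.
case: ((s, t) \in E); last exact: measurable_cst.
exact: (measurableT_comp (measurable_realfun.measurable_powR _) (mZ _)).
Qed.

Lemma int_bdd (h : Om -> R) (M : R) : measurable_fun setT h ->
  (forall w, 0 <= h w <= M) -> P.-integrable setT (EFin \o h).
Proof.
move=> mh hM; apply: measurable_bounded_integrable => //.
  by apply: (le_lt_trans (probability_le1 P measurableT)); exact: ltry.
have M0 : 0 <= M by case/andP: (hM point) => h0 h1; apply: le_trans h1.
rewrite /bounded_near; near=> M' => w _ /=.
case/andP: (hM w) => h0 h1; rewrite ger0_norm //; apply: (le_trans h1).
near: M'; apply: nbhs_pinfty_ge; exact: ger0_real.
Unshelve. all: by end_near.
Qed.


Lemma ae01 (Z : Om -> R) (a b : R) : measurable_fun setT Z ->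
  has_beta_law P Z a b -> \forall w \ae P, 0 <= Z w <= 1.
Proof.
move=> mZ hb; exists (Z @^-1` (~` `[0, 1])); split.
- rewrite -[Z @^-1` _]setTI; apply: mZ => //; apply: measurableC; exact: measurable_itv.
- rewrite hb; last by apply: measurableC; exact: measurable_itv.
  by rewrite setICl integral_set0 /= mul0r.
- move=> w /= nw hw; apply: nw; move: hw; rewrite /= in_itv /=.
  by [].
Qed.

Lemma meas_clamp : measurable_fun setT (clamp).
Proof.
have -> : clamp = ((fun x => x) \max (cst 0)) \min (cst 1).
  by apply/funext => x.
apply: measurable_minr; last exact: measurable_cst.
apply: measurable_maxr; [exact: measurable_id | exact: measurable_cst].
Qed.

Lemma Eeq (S T : finType) (E : {set S * T}) (Xs : S * T -> {RV P >-> R}) (y : S -> R) :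
  (forall e, e \in E -> \forall w \ae P, 0 <= Xs e w <= 1) ->
  fine ('E_P[fun w => influence E y (fun e => Xs e w)]) =
  Rintegral P setT (fun w => influence E y (fun e => clamp (Xs e w))).
Proof.
move=> hae; rewrite unlock /Rintegral; congr fine.
apply: ae_eq_integral => //.
- apply/measurable_EFinP; apply: meas_infl => e; exact: measurable_funP.
- apply/measurable_EFinP; apply: meas_infl => e.
  apply: measurableT_comp; [exact: meas_clamp|exact: measurable_funP].
- have H : \forall w \ae P, forall e, e \in E -> 0 <= Xs e w <= 1.
    apply: (@filter_forall _ _ (fun e w => e \in E -> 0 <= Xs e w <= 1)) => e.
    have [he|he] := boolP (e \in E); first by apply: filterS (hae e he) => w h _.
    by apply: aeW.
  apply: filterS H => w H _ /=; congr EFin; rewrite /influence.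
  apply: eq_bigr => t _; congr (_ - _); apply: eq_bigr => s hs.
  by rewrite clampE //; exact: H.
Qed.

End Prob.
End Alg.

Unset Implicit Arguments. Set Strict Implicit.

Theorem proposition2 (R : realType) (S T : finType) (E : {set S * T})
    (alpha beta : S * T -> R)
    (d : measure_display) (Om : measurableType d) (P : probability Om R)
    (X : S * T -> {RV P >-> R})
    (Y : set (S -> R)) :
  (forall e, e \in E -> 0 <= alpha e /\ 0 <= beta e) ->
  (forall e, e \in E -> has_beta_law P (X e) (alpha e) (beta e)) ->
  mutually_independent P E (fun e => (X e : Om -> R)) ->
  (forall y, Y y -> forall s, 0 <= y s) ->
  convex_dom Y ->
  concave_on Y (fun y => influence E y (fun e => fine ('E_P[X e]))) /\
  concave_on Y (fun y => fine ('E_P[fun w => influence E y (fun e => X e w)])).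
Proof.
move=> hab hbeta _ hY hconv; split.
  by move=> y1 y2 l Y1 Y2 hl; apply: infl_conc => //; exact: hY.
have hae e : e \in E -> \forall w \ae P, 0 <= X e w <= 1.
  move=> he; apply: (ae01 (a := alpha e) (b := beta e)); [exact: measurable_funP | exact: hbeta].
move=> y1 y2 l Y1 Y2 hl.
have h1 := hY _ Y1; have h2 := hY _ Y2; have h3 := hY _ (hconv _ _ _ Y1 Y2 hl).
rewrite !(Eeq _ hae).
set g := fun y w => influence E y (fun e => clamp (X e w)).
set M := \sum_(t : T) (1 : R).
have mg y : measurable_fun setT (g y).
  apply: meas_infl => e; apply: measurableT_comp; [exact: meas_clamp|exact: measurable_funP].
have ib y w : (forall s, 0 <= y s) -> 0 <= g y w <= M.
  by move=> hy; apply: infl_bound => // e; exact: clamp01.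
have ig y : (forall s, 0 <= y s) -> P.-integrable setT (EFin \o g y).
  by move=> hy; apply: (@int_bdd _ _ _ P _ M) => // w; exact: ib.
case/andP: (hl) => l0 l1.
have igl : P.-integrable setT (EFin \o (fun w => l * g y1 w)).
  apply: (@int_bdd _ _ _ P _ M) => [|w].
    by apply: measurable_funM => //; exact: measurable_cst.
  have /andP[a b] := ib y1 w h1; apply/andP; split; nra.
have igr : P.-integrable setT (EFin \o (fun w => (1 - l) * g y2 w)).
  apply: (@int_bdd _ _ _ P _ M) => [|w].
    by apply: measurable_funM => //; exact: measurable_cst.
  have /andP[a b] := ib y2 w h2; apply/andP; split; nra.
have -> : l * Rintegral P setT (g y1) + (1 - l) * Rintegral P setT (g y2) =
    Rintegral P setT (fun w => l * g y1 w + (1 - l) * g y2 w).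
  rewrite (RintegralD measurableT igl igr).
  rewrite RintegralZl //; last exact: ig.
  by rewrite RintegralZl //; exact: ig.
apply: le_Rintegral => //.
- apply: (@int_bdd _ _ _ P _ M) => [|w].
    apply: measurable_funD; apply: measurable_funM => //; exact: measurable_cst.
  have /andP[a b] := ib y1 w h1; have /andP[a' b'] := ib y2 w h2.
  apply/andP; split; nra.
- exact: (ig _ h3).
- move=> w _; apply: infl_conc => // e; exact: clamp01.
Qed.
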